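(* Assume $\mathcal M$ satisfies extensibility. Let $\lambda\in\mathbb R^A$, $\lambda>0$, and partition $A$ by equality of $\lambda_i$ into $S_1,\dots,S_d$ with $\lambda(S_1)<\dots<\lambda(S_d)$. Let $R\subseteq S_d$, let $\hat X$ be an optimal solution of $LP(\lambda)$ that is jointly optimal for $R$, and let $(\hat\alpha,\hat p)$ be an optimal solution of $DLP(\lambda)$. For $a>0$ let $\lambda'=\lambda+a\mathbf 1_R$. Then $\hat X$ is optimal for $LP(\lambda')$, and there exists an optimal solution $(\alpha',p')$ of $DLP(\lambda')$ such that: $p'_j\ge\hat p_j$ for all $j\in G$; $p'_j=\hat p_j$ for every $j$ with $\sum_{i\notin R}\hat x_{ij}>0$; and $\alpha'_{ik}=\hat\alpha_{ik}$ for all $i\notin R$ and all $k\in C$.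
   Context: A market $\mathcal M$: finite agent set $A$, finite goods set $G$ (supply $1$ each), finite index set $C$; agent $i$ has real coefficients $a_{ijk}$, requirements $r_{ik}\ge0$, delays $d_{ij}\ge0$. CC$(i)$: $\sum_ja_{ijk}x_{ij}\ge r_{ik}$ for all $k$, $x_{ij}\ge0$. An allocation $X\ge0$ is supply respecting if $\sum_ix_{ij}\le1$ for all $j$. For $S\subseteq A$, $X$ is jointly optimal for $S$ if it satisfies CC$(i)$ for all $i\in S$, is supply respecting, and minimizes $\sum_{i\in S}\sum_jd_{ij}x_{ij}$ among such allocations. Extensibility: for every $S\subset A$, every $X$ jointly optimal for $S$ and every $i\in A\setminus S$, there is $X'$ jointly optimal for $S\cup\{i\}$ with $\sum_jd_{i'j}x'_{i'j}=\sum_jd_{i'j}x_{i'j}$ for all $i'\in S$. $LP(\lambda)$: minimize $\sum_i\lambda_i\sum_jd_{ij}x_{ij}$ s.t. $\sum_ja_{ijk}x_{ij}\ge r_{ik}$ for all $(i,k)$, $\sum_ix_{ij}\le1$ for all $j$, $x\ge0$. $DLP(\lambda)$: maximize $\sum_{i,k}r_{ik}\alpha_{ik}-\sum_jp_j$ s.t. $\lambda_id_{ij}\ge\sum_ka_{ijk}\alpha_{ik}-p_j$ for all $(i,j)$, $\alpha,p\ge0$. $\lambda(S)$ is the common value of $\lambda_i$ on $S$; $\mathbf 1_R\in\{0,1\}^A$ is the indicator vector of $R$. *)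

(* Defs.v *)
From HB Require Import structures.
From mathcomp Require Import all_boot all_order all_algebra.
Set Implicit Arguments. Unset Strict Implicit. Unset Printing Implicit Defensive.
Import Order.TTheory GRing.Theory Num.Theory.
Local Open Scope ring_scope.

Section Market.
Variables (R : realFieldType) (A G C : finType).
(* coef i j k = a_{ijk}, req i k = r_{ik}, delay i j = d_{ij} *)
Variables (coef : A -> G -> C -> R) (req : A -> C -> R) (delay : A -> G -> R).

Definition agent_cost (X : A -> G -> R) (i : A) : R :=
  \sum_(j : G) delay i j * X i j.

Definition CC (i : A) (X : A -> G -> R) : Prop :=
  (forall k : C, req i k <= \sum_(j : G) coef i j k * X i j) /\
  (forall j : G, 0 <= X i j).

Definition supply_respecting (X : A -> G -> R) : Prop :=
  (forall i j, 0 <= X i j) /\ (forall j : G, \sum_(i : A) X i j <= 1).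

Definition jointly_optimal (S : {set A}) (X : A -> G -> R) : Prop :=
  [/\ (forall i, i \in S -> CC i X), supply_respecting X &
      forall Y : A -> G -> R, (forall i, i \in S -> CC i Y) -> supply_respecting Y ->
        \sum_(i in S) agent_cost X i <= \sum_(i in S) agent_cost Y i].

Definition extensibility : Prop :=
  forall (S : {set A}) (X : A -> G -> R), jointly_optimal S X ->
  forall i : A, i \notin S ->
  exists X' : A -> G -> R, jointly_optimal (i |: S) X' /\
    forall i', i' \in S -> agent_cost X' i' = agent_cost X i'.

Definition LP_feasible (X : A -> G -> R) : Prop :=
  (forall i k, req i k <= \sum_(j : G) coef i j k * X i j) /\ supply_respecting X.

Definition LP_obj (lam : A -> R) (X : A -> G -> R) : R :=
  \sum_(i : A) lam i * agent_cost X i.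

Definition LP_optimal (lam : A -> R) (X : A -> G -> R) : Prop :=
  LP_feasible X /\ forall Y, LP_feasible Y -> LP_obj lam X <= LP_obj lam Y.

Definition DLP_feasible (lam : A -> R) (alpha : A -> C -> R) (p : G -> R) : Prop :=
  [/\ (forall i j, \sum_(k : C) coef i j k * alpha i k - p j <= lam i * delay i j),
      (forall i k, 0 <= alpha i k) & (forall j, 0 <= p j)].

Definition DLP_obj (alpha : A -> C -> R) (p : G -> R) : R :=
  \sum_(i : A) \sum_(k : C) req i k * alpha i k - \sum_(j : G) p j.

Definition DLP_optimal (lam : A -> R) (alpha : A -> C -> R) (p : G -> R) : Prop :=
  DLP_feasible lam alpha p /\
  forall alpha0 p0, DLP_feasible lam alpha0 p0 -> DLP_obj alpha0 p0 <= DLP_obj alpha p.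

End Market.

Definition top_class (R : realFieldType) (A : finType) (lam : A -> R) : {set A} :=
  [set i | [forall i', lam i' <= lam i]].

Definition lam_shift (R : realFieldType) (A : finType) (lam : A -> R) (a : R) (Rs : {set A})
  : A -> R := fun i => lam i + (if i \in Rs then a else 0).

(* Main.v *)
Require Import Defs.
From HB Require Import structures.
From mathcomp Require Import all_boot all_order all_algebra.
From mathcomp Require Import ring lra.
Set Implicit Arguments. Unset Strict Implicit. Unset Printing Implicit Defensive.
Import Order.TTheory GRing.Theory Num.Theory.
Local Open Scope ring_scope.

Section Farkas.
Variable R : realFieldType.

Definition Fcomb (I : finType) (l F : I -> R) (k : I + I * I) : R :=
  match k with
  | inl i => if l i == 0 then F i else 0
  | inr ij => if (0 < l ij.1) && (l ij.2 < 0) then - l ij.2 * F ij.1 + l ij.1 * F ij.2 else 0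
  end.

Definition ycomb (I : finType) (l : I -> R) (y' : I + I * I -> R) (i : I) : R :=
  (if l i == 0 then y' (inl i) else 0)
  + \sum_j (if (0 < l i) && (l j < 0) then y' (inr (i, j)) * - l j else 0)
  + \sum_j (if (0 < l j) && (l i < 0) then y' (inr (j, i)) * l j else 0).

Lemma combine (I : finType) (l : I -> R) (y' : I + I * I -> R) (F : I -> R) :
  \sum_i ycomb l y' i * F i = \sum_k y' k * Fcomb l F k.
Proof.
rewrite big_sumType /=.
have -> : \sum_(p : I * I) y' (inr p) * Fcomb l F (inr p) =
   \sum_i \sum_j y' (inr (i, j)) * Fcomb l F (inr (i, j)).
  by rewrite pair_bigA; apply: eq_bigr; case.
rewrite /=.
rewrite /ycomb.
under eq_bigr do rewrite !mulrDl.
rewrite !big_split /= -addrA; congr (_ + _).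
  by apply: eq_bigr => i _; case: ifP; rewrite ?mulr0 ?mul0r.
have E (f : I -> I -> R) : \sum_i (\sum_j f i j) * F i = \sum_i \sum_j f i j * F i.
  by apply: eq_bigr => i _; rewrite mulr_suml.
rewrite !E.
rewrite [X in _ + X = _]exchange_big /=.
rewrite -big_split /=; apply: eq_bigr => i _.
rewrite -big_split /=; apply: eq_bigr => j _.
case: ifP => _; last by rewrite !mul0r mulr0 addr0.
by rewrite mulrDr !mulrA.
Qed.


Lemma pos_step (z t r : R) : 0 < z -> t <= r / z -> z * t <= r.
Proof. by move=> hz; rewrite ler_pdivlMr // mulrC. Qed.

Lemma neg_step (z t r : R) : z < 0 -> r / z <= t -> z * t <= r.
Proof. by move=> hz; rewrite ler_ndivrMr // mulrC. Qed.

Lemma pn_step (li lj ri rj : R) : 0 < li -> lj < 0 -> 0 <= - lj * ri + li * rj ->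
  rj / lj <= ri / li.
Proof.
move=> hi hj h; rewrite ler_ndivrMr // -(ler_pM2l hi).
have -> : li * (ri / li * lj) = ri * lj by field; rewrite gt_eqF.
lra.
Qed.


Lemma farkas_base (I : finType) (M : I -> 'I_0 -> R) (b : I -> R) :
  (forall y : I -> R, (forall i, 0 <= y i) -> (forall v, \sum_i y i * M i v = 0) ->
     0 <= \sum_i y i * b i) ->
  exists x : 'I_0 -> R, forall i, \sum_v M i v * x v <= b i.
Proof.
move=> H; exists (fun _ => 0) => i; rewrite big_ord0.
have := H (fun i' => if i' == i then 1 else 0).
rewrite (bigD1 i) //= eqxx mul1r big1 ?addr0; first apply.
- by move=> i'; case: ifP.
- by case.
by move=> i' /negbTE ->; rewrite mul0r.
Qed.


Lemma farkas_ord n : forall (I : finType) (M : I -> 'I_n -> R) (b : I -> R),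
  (forall y : I -> R, (forall i, 0 <= y i) -> (forall v, \sum_i y i * M i v = 0) ->
     0 <= \sum_i y i * b i) ->
  exists x : 'I_n -> R, forall i, \sum_v M i v * x v <= b i.
Proof.
elim: n => [|n IH] I M b H; first exact: farkas_base.
pose l i := M i ord_max.
pose M0 i (v : 'I_n) := M i (widen_ord (leqnSn n) v).
have EW (v : 'I_n) : lift ord_max v = widen_ord (leqnSn n) v by apply: val_inj => /=; rewrite /bump leqNgt ltn_ord.
pose M' (k : I + I * I) (v : 'I_n) := Fcomb l (fun i => M0 i v) k.
pose b' := Fcomb l b.
have [x' Hx'] : exists x' : 'I_n -> R, forall k, \sum_v M' k v * x' v <= b' k.
  apply: IH => y' y'0 hy'.
  rewrite -combine; apply: H.
  - move=> i; rewrite /ycomb; apply: addr_ge0; first apply: addr_ge0.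
    + by case: ifP.
    + apply: sumr_ge0 => j _; case: ifP => // /andP[h1 h2].
      by apply: mulr_ge0 => //; rewrite oppr_ge0 ltW.
    + apply: sumr_ge0 => j _; case: ifP => // /andP[h1 h2].
      by apply: mulr_ge0 => //; rewrite ltW.
  - move=> v; case: (unliftP ord_max v) => [v' ->|->].
      have -> : lift ord_max v' = widen_ord (leqnSn n) v' := EW v'.
      exact: (etrans (combine l y' (fun i => M0 i v')) (hy' v')).
    rewrite (combine l y' l) big1 // => k _.
    case: k => [i|[i j]] /=; first by case: ifP => [/eqP ->|]; rewrite mulr0.
    by case: ifP; rewrite ?mulr0 // => _; rewrite mulNr [l j * _]mulrC addNr mulr0.
pose r i := b i - \sum_v M0 i v * x' v.
have hz i : l i = 0 -> 0 <= r i.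
  move=> li0; have := Hx' (inl i); rewrite /M' /b' /= li0 eqxx.
  by rewrite subr_ge0.
have hpn i j : 0 < l i -> l j < 0 -> r j / l j <= r i / l i.
  move=> hi hj; apply: pn_step => //.
  have := Hx' (inr (i, j)); rewrite /M' /b' /= hi hj /=.
  under eq_bigr do rewrite mulrDl -!mulrA.
  rewrite big_split /= -!mulr_sumr => h.
  rewrite /r !mulrDr !mulrN; lra.
have [t ht] : exists t, forall i, l i * t <= r i.
  case: (pickP (fun i => 0 < l i)) => [i0 hi0 | hnopos].
    case: (@arg_minP _ _ _ i0 (fun i => 0 < l i) (fun i => r i / l i) hi0) => im him hmin.
    exists (r im / l im) => i.
    case: (ltrgtP (l i) 0) => [hneg|hpos|h0].
    - by apply: neg_step => //; apply: hpn.
    - by apply: pos_step => //; apply: hmin.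
    - by rewrite h0 mul0r; apply: hz.
  case: (pickP (fun i => l i < 0)) => [j0 hj0 | hnoneg].
    case: (@arg_maxP _ _ _ j0 (fun i => l i < 0) (fun i => r i / l i) hj0) => jm hjm hmax.
    exists (r jm / l jm) => i.
    case: (ltrgtP (l i) 0) => [hneg|hpos|h0].
    - by apply: neg_step => //; apply: hmax.
    - by have := hnopos i; rewrite /= hpos.
    - by rewrite h0 mul0r; apply: hz.
  exists 0 => i; rewrite mulr0; apply: hz.
  case: (ltrgtP (l i) 0) => // [hneg|hpos].
    by have := hnoneg i; rewrite /= hneg.
  by have := hnopos i; rewrite /= hpos.
exists (fun v => if unlift ord_max v is Some v' then x' v' else t) => i.
rewrite big_ord_recr /= unlift_none.
under eq_bigr do rewrite -EW liftK.
have := ht i; rewrite /r /l /M0.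
under eq_bigr do rewrite EW.
move=> h; lra.
Qed.


Lemma farkas (V I : finType) (M : I -> V -> R) (b : I -> R) :
  (forall y : I -> R, (forall i, 0 <= y i) -> (forall v, \sum_i y i * M i v = 0) ->
     0 <= \sum_i y i * b i) ->
  exists x : V -> R, forall i, \sum_v M i v * x v <= b i.
Proof.
move=> H.
have [x' hx'] := @farkas_ord #|V| I (fun i (v : 'I_#|V|) => M i (enum_val v)) b
  (fun y y0 hy => H y y0 (fun v => etrans (congr1 (fun w => \sum_i y i * M i w) (esym (enum_rankK v))) (hy (enum_rank v)))).
exists (fun v => x' (enum_rank v)) => i.
rewrite (reindex (@enum_val V (pred_of_simpl predT))) /=; last by apply: onW_bij; exact: enum_val_bij.
under eq_bigr do rewrite enum_valK.
exact: hx'.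
Qed.


Lemma sum_unit (F : unit -> R) : \sum_u F u = F tt.
Proof. by rewrite (big_pred1 tt) // => -[]. Qed.

Lemma sum_pair (T1 T2 : finType) (F : T1 * T2 -> R) : \sum_p F p = \sum_a \sum_b F (a, b).
Proof. by rewrite pair_bigA; apply: eq_bigr => -[]. Qed.

Lemma sum_delta (T : finType) (t0 : T) (f : T -> R) :
  \sum_t (if t == t0 then f t else 0) = f t0.
Proof. by rewrite -big_mkcond big_pred1_eq. Qed.

Lemma sum_delta' (T : finType) (t0 : T) (f : T -> R) :
  \sum_t (if t0 == t then f t else 0) = f t0.
Proof. by under eq_bigr do rewrite eq_sym; rewrite sum_delta. Qed.

Lemma ifmul0 (b : bool) (a y : R) : (if b then a else 0) * y = if b then a * y else 0.
Proof. by case: b; rewrite ?mul0r. Qed.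

Lemma mulif0 (b : bool) (a y : R) : y * (if b then a else 0) = if b then y * a else 0.
Proof. by case: b; rewrite ?mulr0. Qed.

Lemma sum_if_const (T : finType) (b : bool) (f : T -> R) :
  \sum_t (if b then f t else 0) = if b then \sum_t f t else 0.
Proof. by case: b => //; rewrite big1. Qed.

Section SD.
Variables (A G C : finType) (coef : A -> G -> C -> R) (req : A -> C -> R)
  (c : A -> G -> R) (J : pred G).

Definition pfeas (Y : A -> G -> R) : Prop :=
  [/\ (forall i k, req i k <= \sum_j coef i j k * Y i j), (forall i j, 0 <= Y i j) &
      (forall j, J j -> \sum_i Y i j <= 1)].

Definition pcost (Y : A -> G -> R) : R := \sum_i \sum_j c i j * Y i j.

Definition SDV := ((A * C) + G)%type.
Definition SDI := ((A * G) + ((A * C) + (G + unit)))%type.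

Definition SDM (k : SDI) (v : SDV) : R :=
  match k with
  | inl ij => match v with
      | inl ik => if ik.1 == ij.1 then coef ij.1 ij.2 ik.2 else 0
      | inr j' => if (j' == ij.2) && J ij.2 then -1 else 0 end
  | inr (inl ik) => match v with inl ik' => if ik' == ik then -1 else 0 | inr _ => 0 end
  | inr (inr (inl j)) => match v with inl _ => 0 | inr j' => if j' == j then -1 else 0 end
  | inr (inr (inr _)) => match v with inl ik => - req ik.1 ik.2 | inr j => if J j then 1 else 0 end
  end.

Definition SDb (v0 : R) (k : SDI) : R :=
  match k with
  | inl ij => c ij.1 ij.2
  | inr (inl _) => 0
  | inr (inr (inl _)) => 0
  | inr (inr (inr _)) => - v0
  end.

Lemma row1 (x : SDV -> R) i j : \sum_v SDM (inl (i, j)) v * x v =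
  \sum_k coef i j k * x (inl (i, k)) - (if J j then x (inr j) else 0).
Proof.
rewrite big_sumType /= sum_pair.
rewrite (bigD1 i) //= [X in _ + X + _]big1 => [|a ne]; last by apply: big1 => b _; rewrite /= (negbTE ne) mul0r.
rewrite (bigD1 j) //= [X in _ + (_ + X)]big1 => [|j' ne]; last by rewrite (negbTE ne) mul0r.
rewrite !addr0; congr (_ + _); first by apply: eq_bigr => k _; rewrite eqxx.
by rewrite eqxx; case: (J j); rewrite ?mulN1r ?mul0r ?oppr0.
Qed.



Lemma row2 (x : SDV -> R) i k : \sum_v SDM (inr (inl (i, k))) v * x v = - x (inl (i, k)).
Proof.
rewrite big_sumType /= [X in _ + X = _]big1 ?addr0 => [|j _]; last by rewrite mul0r.
rewrite (bigD1 (i, k)) //= [X in _ + X = _]big1 => [|ik ne]; last by rewrite (negbTE ne) mul0r.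
by rewrite eqxx mulN1r addr0.
Qed.

Lemma row3 (x : SDV -> R) j : \sum_v SDM (inr (inr (inl j))) v * x v = - x (inr j).
Proof.
rewrite big_sumType /= big1 ?add0r => [|ik _]; last by rewrite mul0r.
rewrite (bigD1 j) //= [X in _ + X = _]big1 => [|j' ne]; last by rewrite (negbTE ne) mul0r.
by rewrite eqxx mulN1r addr0.
Qed.

Lemma row4 (x : SDV -> R) u : \sum_v SDM (inr (inr (inr u))) v * x v =
  - \sum_i \sum_k req i k * x (inl (i, k)) + \sum_j (if J j then x (inr j) else 0).
Proof.
rewrite big_sumType /= sum_pair; congr (_ + _).
  rewrite -sumrN; apply: eq_bigr => i _; rewrite -sumrN; apply: eq_bigr => k _.
  by rewrite mulNr.
by apply: eq_bigr => j _; case: (J j); rewrite ?mul1r ?mul0r.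
Qed.

Definition tau (y : SDI -> R) := y (inr (inr (inr tt))).

Lemma col1 (y : SDI -> R) i kk : \sum_k y k * SDM k (inl (i, kk)) =
  \sum_j y (inl (i, j)) * coef i j kk - y (inr (inl (i, kk))) - tau y * req i kk.
Proof.
rewrite big_sumType /= big_sumType /= big_sumType /= sum_unit sum_pair /tau.
rewrite [X in _ + (_ + (X + _)) = _]big1 ?add0r => [|j _]; last by rewrite mulr0.
rewrite (bigD1 i) //= [X in _ + X + _ = _]big1 => [|a ne]; last first.
  by apply: big1 => b _; rewrite /= eq_sym (negbTE ne) mulr0.
rewrite (bigD1 (i, kk)) //= [X in _ + (_ + X + _) = _]big1 => [|ik ne]; last first.
  by rewrite eq_sym (negbTE ne) mulr0.
by rewrite !eqxx !addr0 mulrN1 mulrN addrA.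
Qed.

Lemma col2 (y : SDI -> R) j : \sum_k y k * SDM k (inr j) =
  - (if J j then \sum_i y (inl (i, j)) else 0) - y (inr (inr (inl j))) + (if J j then tau y else 0).
Proof.
rewrite big_sumType /= big_sumType /= big_sumType /= sum_unit sum_pair /tau.
rewrite [X in _ + (X + _) = _]big1 ?add0r => [|ik _]; last by rewrite mulr0.
rewrite (bigD1 j) //= [X in _ + (_ + X + _) = _]big1 => [|j' ne]; last first.
  by rewrite eq_sym (negbTE ne) mulr0.
rewrite eqxx mulrN1 addr0 addrA; congr (_ + _ + _); last by case: (J j); rewrite ?mulr1 ?mulr0.
case hJ: (J j) => /=; last first.
  rewrite oppr0 big1 // => a _; rewrite big1 // => b _.
  by case: eqP => [<-|_] /=; rewrite ?hJ mulr0.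
rewrite -sumrN; apply: eq_bigr => i _.
rewrite (bigD1 j) //= big1 => [|j' ne]; last by rewrite eq_sym (negbTE ne) /= mulr0.
by rewrite eqxx addr0 hJ mulrN1.
Qed.

Lemma colb (y : SDI -> R) v0 : \sum_k y k * SDb v0 k =
  \sum_i \sum_j y (inl (i, j)) * c i j - tau y * v0.
Proof.
rewrite big_sumType /= big_sumType /= big_sumType /= sum_unit sum_pair /tau.
rewrite [X in _ + (X + _) = _]big1 ?add0r => [|ik _]; last by rewrite mulr0.
rewrite [X in _ + (X + _) = _]big1 ?add0r => [|j _]; last by rewrite mulr0.
by rewrite mulrN.
Qed.


Lemma strong_dual X : pfeas X -> (forall Y, pfeas Y -> pcost X <= pcost Y) ->
  exists (alpha : A -> C -> R) (p : G -> R),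
  [/\ (forall i k, 0 <= alpha i k), (forall j, 0 <= p j), (forall j, ~~ J j -> p j = 0),
      (forall i j, \sum_k coef i j k * alpha i k - p j <= c i j) &
      pcost X <= \sum_i \sum_k req i k * alpha i k - \sum_j p j].
Proof.
move=> [hX1 hX2 hX3] hopt.
have [x hx] : exists x : SDV -> R, forall k, \sum_v SDM k v * x v <= SDb (pcost X) k.
  apply: farkas => y y0 hy.
  rewrite colb.
  set t := tau y.
  have t0 : 0 <= t := y0 _.
  have ht1 : 0 < t + 1 by lra.
  pose Yd i j := y (inl (i, j)).
  have E1 i kk : t * req i kk <= \sum_j coef i j kk * Yd i j.
    have := hy (inl (i, kk)); rewrite col1 -/t => h.
    have := y0 (inr (inl (i, kk))).
    have -> : \sum_j coef i j kk * Yd i j = \sum_j y (inl (i, j)) * coef i j kk.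
      by apply: eq_bigr => j _; rewrite mulrC.
    lra.
  have E2 j : J j -> \sum_i Yd i j <= t.
    move=> hJ; have := hy (inr j); rewrite col2 -/t hJ => h.
    have := y0 (inr (inr (inl j))); rewrite /Yd; lra.
  pose Z i j := (Yd i j + X i j) / (t + 1).
  have hZ : pfeas Z.
    split.
    - move=> i k.
      have -> : \sum_j coef i j k * Z i j =
          (\sum_j coef i j k * Yd i j + \sum_j coef i j k * X i j) / (t + 1).
        by rewrite -big_split mulr_suml; apply: eq_bigr => j _; rewrite /Z mulrA mulrDr.
      rewrite ler_pdivlMr //; have := E1 i k; have := hX1 i k; lra.
    - move=> i j; apply: divr_ge0; last lra.
      by apply: addr_ge0; [exact: y0 | exact: hX2].
    - move=> j hJ; rewrite /Z -mulr_suml big_split ler_pdivrMr // mul1r.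
      exact: (lerD (E2 j hJ) (hX3 j hJ)).
  have := hopt Z hZ.
  have -> : pcost Z = (\sum_i \sum_j c i j * Yd i j + pcost X) / (t + 1).
    rewrite /pcost -big_split mulr_suml; apply: eq_bigr => i _.
    by rewrite -big_split mulr_suml; apply: eq_bigr => j _; rewrite /Z mulrA mulrDr.
  rewrite ler_pdivlMr // => h.
  have -> : \sum_i \sum_j y (inl (i, j)) * c i j = \sum_i \sum_j c i j * Yd i j.
    by apply: eq_bigr => i _; apply: eq_bigr => j _; rewrite mulrC.
  lra.
exists (fun i k => x (inl (i, k))), (fun j => if J j then x (inr j) else 0).
split.
- by move=> i k; have := hx (inr (inl (i, k))); rewrite row2 /=; lra.
- move=> j; case: ifP => // _; have := hx (inr (inr (inl j))); rewrite row3 /=; lra.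
- by move=> j /negbTE ->.
- by move=> i j; have := hx (inl (i, j)); rewrite row1.
- by have := hx (inr (inr (inr tt))); rewrite row4 /=; lra.
Qed.

End SD.
End Farkas.

Section Main.
Variables (R : realFieldType) (A G C : finType).
Variables (coef : A -> G -> C -> R) (req : A -> C -> R) (delay : A -> G -> R).

Lemma objE lam X : LP_obj delay lam X = \sum_i \sum_j lam i * delay i j * X i j.
Proof.
rewrite /LP_obj /agent_cost; apply: eq_bigr => i _; rewrite mulr_sumr.
by apply: eq_bigr => j _; rewrite mulrA.
Qed.

Lemma obj_shift lam a (Rs : {set A}) X :
  LP_obj delay (lam_shift lam a Rs) X =
  LP_obj delay lam X + a * \sum_(i in Rs) agent_cost delay X i.
Proof.
rewrite /LP_obj /lam_shift mulr_sumr [X in _ = _ + X]big_mkcond -big_split /=.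
apply: eq_bigr => i _; rewrite mulrDl.
by case: ifP => _; rewrite ?mul0r ?addr0.
Qed.

Lemma weak_dual lam alpha p X :
  DLP_feasible coef delay lam alpha p -> LP_feasible coef req X ->
  DLP_obj req alpha p <= LP_obj delay lam X.
Proof.
move=> [hd ha hp] [hr [hX hs]].
have step1 : \sum_i \sum_k req i k * alpha i k <=
    \sum_i \sum_j X i j * (lam i * delay i j + p j).
  apply: (le_trans (y := \sum_i \sum_k (\sum_j coef i j k * X i j) * alpha i k)).
    apply: ler_sum => i _; apply: ler_sum => k _; apply: ler_wpM2r => //; exact: hr.
  apply: ler_sum => i _.
  have -> : \sum_k (\sum_j coef i j k * X i j) * alpha i k =
      \sum_j X i j * \sum_k coef i j k * alpha i k.
    under eq_bigr do rewrite mulr_suml.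
    rewrite exchange_big; apply: eq_bigr => j _; rewrite mulr_sumr.
    by apply: eq_bigr => k _; rewrite [coef i j k * X i j]mulrC -mulrA.
  apply: ler_sum => j _; apply: ler_wpM2l => //; have := hd i j; lra.
have step2 : \sum_i \sum_j X i j * (lam i * delay i j + p j) =
    LP_obj delay lam X + \sum_j p j * \sum_i X i j.
  have -> : \sum_j p j * \sum_i X i j = \sum_i \sum_j X i j * p j.
    rewrite exchange_big; apply: eq_bigr => j _; rewrite mulr_sumr.
    by apply: eq_bigr => i _; rewrite mulrC.
  rewrite objE -big_split; apply: eq_bigr => i _; rewrite -big_split.
  by apply: eq_bigr => j _; rewrite mulrDr [X i j * (_ * _)]mulrC.
have step3 : \sum_j p j * \sum_i X i j <= \sum_j p j.
  apply: ler_sum => j _; rewrite -[leRHS]mulr1; exact: ler_wpM2l.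
rewrite /DLP_obj; lra.
Qed.

Lemma sum_lin (T : finType) (u v : T -> R) s t :
  \sum_x (s * u x + t * v x) = s * \sum_x u x + t * \sum_x v x.
Proof. by rewrite big_split !mulr_sumr. Qed.

Lemma lin_sum (T : finType) (f u v : T -> R) s t :
  \sum_x f x * (s * u x + t * v x) = s * \sum_x f x * u x + t * \sum_x f x * v x.
Proof.
rewrite !mulr_sumr -big_split; apply: eq_bigr => x _.
by rewrite mulrDr (mulrCA (f x) s) (mulrCA (f x) t).
Qed.

Lemma conv_opt (Rs : {set A}) (Xh : A -> G -> R) :
  LP_feasible coef req Xh -> jointly_optimal coef req delay Rs Xh ->
  forall Y, pfeas coef (fun i k => if i \in Rs then req i k else 0)
                 (fun j => ~~ (0 < \sum_(i | i \notin Rs) Xh i j)) Y ->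
  \sum_(i in Rs) agent_cost delay Xh i <= \sum_(i in Rs) agent_cost delay Y i.
Proof.
move=> [hr [hX hs]] [_ _ hjo] Y [hY1 hY2 hY3].
set n := fun j => \sum_(i | i \notin Rs) Xh i j.
pose Y' i j := if i \in Rs then Y i j else 0.
pose X' i j := if i \in Rs then Xh i j else 0.
pose T := \sum_j \sum_i Y' i j.
have hY'0 i j : 0 <= Y' i j by rewrite /Y'; case: ifP.
have hX'0 i j : 0 <= X' i j by rewrite /X'; case: ifP.
have T0 : 0 <= T by apply: sumr_ge0 => j _; apply: sumr_ge0.
have hYT j : \sum_i Y' i j <= T.
  rewrite /T (bigD1 j) //= lerDl; apply: sumr_ge0 => j' _; exact: sumr_ge0.
have n0 j : 0 <= n j by apply: sumr_ge0.
have hsplit j : \sum_i Xh i j = \sum_i X' i j + n j.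
  rewrite (bigID (fun i => i \in Rs)) /= big_mkcond /=; congr (_ + _).
have hX'1 j : \sum_i X' i j + n j <= 1 by rewrite -hsplit; exact: hs.
have [m [m0 m1 hm]] : exists m : R, [/\ 0 < m, m <= 1 & forall j, 0 < n j -> m <= n j].
  case: (pickP (fun j => 0 < n j)) => [j0 hj0|hno].
    case: (@arg_minP _ _ _ j0 (fun j => 0 < n j) n hj0) => jm hjm hmin.
    exists (n jm); split => //.
    have := hX'1 jm; have : 0 <= \sum_i X' i jm by apply: sumr_ge0.
    lra.
  exists 1; split; [exact: ltr01 | exact: lexx | by move=> j; rewrite hno].
pose t := m / (1 + T).
have t0 : 0 < t by apply: divr_gt0 => //; lra.
have t1 : t <= m.
  rewrite /t ler_pdivrMr; last lra.
  have : 0 <= m * T by apply: mulr_ge0 => //; lra.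
  lra.
have tY j : t * \sum_i Y' i j <= m.
  apply: (le_trans (y := t * T)); first by apply: ler_wpM2l; [lra | exact: hYT].
  rewrite /t mulrAC ler_pdivrMr; last lra.
  have : 0 <= m * T by apply: mulr_ge0 => //; lra.
  lra.
pose Z i j := (1 - t) * X' i j + t * Y' i j.
have hZ0 i j : 0 <= Z i j.
  by apply: addr_ge0; apply: mulr_ge0 => //; lra.
have hZcc i : i \in Rs -> CC coef req i Z.
  move=> hi; split; last by move=> j; exact: hZ0.
  move=> k; rewrite /Z lin_sum.
  have -> : \sum_j coef i j k * X' i j = \sum_j coef i j k * Xh i j.
    by apply: eq_bigr => j _; rewrite /X' hi.
  have -> : \sum_j coef i j k * Y' i j = \sum_j coef i j k * Y i j.
    by apply: eq_bigr => j _; rewrite /Y' hi.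
  have h1 := ler_wpM2l (_ : 0 <= 1 - t) (hr i k).
  have h2 := ler_wpM2l (_ : 0 <= t) (hY1 i k); rewrite hi in h2.
  have := h1 ltac:(lra); have := h2 ltac:(lra); lra.
have hZs : supply_respecting Z.
  split => // j; rewrite /Z sum_lin.
  have hX'j : 0 <= \sum_i X' i j by apply: sumr_ge0.
  have hY'j : 0 <= \sum_i Y' i j by apply: sumr_ge0.
  have htX : 0 <= t * \sum_i X' i j by apply: mulr_ge0 => //; lra.
  case: (boolP (0 < n j)) => hn.
    have := hm j hn; have := tY j; have := hX'1 j; lra.
  have hYj : \sum_i Y' i j <= 1.
    apply: (le_trans _ (hY3 j hn)); apply: ler_sum => i _; rewrite /Y'.
    by case: ifP => // _; exact: hY2.
  have := hX'1 j; have := n0 j.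
  have h1 := ler_wpM2l (_ : 0 <= t) hYj.
  have hX1 : \sum_i X' i j <= 1 by have := hX'1 j; have := n0 j; lra.
  have h2 := ler_wpM2l (_ : 0 <= 1 - t) hX1.
  have := h1 ltac:(lra); have := h2 ltac:(lra); lra.
have := hjo Z hZcc hZs.
have -> : \sum_(i in Rs) agent_cost delay Z i =
    (1 - t) * \sum_(i in Rs) agent_cost delay Xh i + t * \sum_(i in Rs) agent_cost delay Y i.
  rewrite !mulr_sumr -big_split; apply: eq_bigr => i hi.
  rewrite /agent_cost /Z lin_sum; congr (_ * _ + _ * _).
    by apply: eq_bigr => j _; rewrite /X' hi.
  by apply: eq_bigr => j _; rewrite /Y' hi.
move=> h.
have : t * \sum_(i in Rs) agent_cost delay Xh i <= t * \sum_(i in Rs) agent_cost delay Y i.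
  lra.
by rewrite ler_pM2l.
Qed.

End Main.


Theorem lemma4p4 (R : realFieldType) (A G C : finType)
  (coef : A -> G -> C -> R) (req : A -> C -> R) (delay : A -> G -> R)
  (hreq : forall i k, 0 <= req i k) (hdelay : forall i j, 0 <= delay i j)
  (hext : extensibility coef req delay)
  (lam : A -> R) (hlam : forall i, 0 < lam i)
  (Rs : {set A}) (hRs : Rs \subset top_class lam)
  (Xh : A -> G -> R) (hXopt : LP_optimal coef req delay lam Xh)
  (hXjo : jointly_optimal coef req delay Rs Xh)
  (alphah : A -> C -> R) (ph : G -> R) (hdual : DLP_optimal coef req delay lam alphah ph)
  (a : R) (ha : 0 < a) :
  LP_optimal coef req delay (lam_shift lam a Rs) Xh /\
  exists (alpha' : A -> C -> R) (p' : G -> R),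
    [/\ DLP_optimal coef req delay (lam_shift lam a Rs) alpha' p',
        (forall j, ph j <= p' j),
        (forall j, 0 < \sum_(i | i \notin Rs) Xh i j -> p' j = ph j) &
        (forall i k, i \notin Rs -> alpha' i k = alphah i k)].
Proof.
have [hXf hXmin] := hXopt.
have hCC Y : LP_feasible coef req Y -> forall i, i \in Rs -> CC coef req i Y.
  by move=> [h1 [h2 h3]] i _; split; [exact: h1 | exact: h2].
have [_ _ hjo] := hXjo.
split.
  split => // Y hY; rewrite !obj_shift.
  have h1 := hXmin Y hY.
  have h2 := hjo Y (hCC Y hY) hY.2.
  have h3 := ler_wpM2l (ltW ha) h2; lra.
have hfeasA : pfeas coef req predT Xh.
  by case: hXf => [h1 [h2 h3]]; split => // j _; exact: h3.
have hoptA Y : pfeas coef req predT Y ->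
    pcost (fun i j => lam i * delay i j) Xh <= pcost (fun i j => lam i * delay i j) Y.
  move=> [h1 h2 h3]; rewrite /pcost -!objE; apply: hXmin.
  by split => //; split => // j; exact: h3.
have [a0 [p0 [ha0 hp0 _ hc0 hob0]]] :=
  @strong_dual R A G C coef req (fun i j => lam i * delay i j) predT Xh hfeasA hoptA.
have [[hd1 hd2 hd3] hdopt] := hdual.
have hA : LP_obj delay lam Xh <= DLP_obj req alphah ph.
  apply: le_trans (hdopt a0 p0 _); last by split.
  by rewrite objE; exact: hob0.
pose J := fun j => ~~ (0 < \sum_(i | i \notin Rs) Xh i j).
pose req' := fun i k => if i \in Rs then req i k else 0.
pose c' := fun i j => if i \in Rs then delay i j else 0.
pose X' := fun i j => if i \in Rs then Xh i j else 0.
have pcostB Y : pcost c' Y = \sum_(i in Rs) agent_cost delay Y i.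
  rewrite /pcost [RHS]big_mkcond; apply: eq_bigr => i _; rewrite /c'.
  case: ifP => _ //; by rewrite big1 // => j _; rewrite mul0r.
have pcostX' : pcost c' X' = \sum_(i in Rs) agent_cost delay Xh i.
  rewrite pcostB; apply: eq_bigr => i hi; rewrite /agent_cost.
  by apply: eq_bigr => j _; rewrite /X' hi.
have hfeasB : pfeas coef req' J X'.
  case: hXf => [h1 [h2 h3]]; split.
  - move=> i k; rewrite /req' /X'; case: ifP => _; first exact: h1.
    by rewrite big1 // => j _; rewrite mulr0.
  - by move=> i j; rewrite /X'; case: ifP => // _; exact: h2.
  - move=> j _; apply: le_trans (h3 j); apply: ler_sum => i _; rewrite /X'.
    by case: ifP => // _; exact: h2.
have hoptB Y : pfeas coef req' J Y -> pcost c' X' <= pcost c' Y.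
  move=> hY; rewrite pcostX' pcostB; exact: (conv_opt hXf hXjo hY).
have [b0 [q0 [hb0 hq0 hqJ hcq hobq]]] :=
  @strong_dual R A G C coef req' c' J X' hfeasB hoptB.
pose bb := fun i k => if i \in Rs then b0 i k else 0.
exists (fun i k => alphah i k + a * bb i k), (fun j => ph j + a * q0 j).
have hbb i k : 0 <= bb i k by rewrite /bb; case: ifP.
have hq0a j : 0 <= a * q0 j by apply: mulr_ge0 => //; exact: ltW.
split.
- split.
  + split.
    * move=> i j.
      have -> : \sum_k coef i j k * (alphah i k + a * bb i k) =
          \sum_k coef i j k * alphah i k + a * \sum_k coef i j k * bb i k.
        by rewrite mulr_sumr -big_split; apply: eq_bigr => k _; rewrite mulrDr mulrCA.
      have := hd1 i j; rewrite /lam_shift /bb.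
      case: ifP => hi.
        have := hcq i j; rewrite /c' hi => h.
        have := ler_wpM2l (ltW ha) h; lra.
      have -> : \sum_k coef i j k * 0 = 0 by rewrite big1 // => k _; rewrite mulr0.
      have := hq0a j; rewrite mulr0 addr0; lra.
    * by move=> i k; apply: addr_ge0 => //; apply: mulr_ge0 => //; exact: ltW.
    * by move=> j; apply: addr_ge0.
  + move=> al p hf.
    apply: le_trans (weak_dual hf hXf) _.
    rewrite obj_shift /DLP_obj.
    have -> : \sum_i \sum_k req i k * (alphah i k + a * bb i k) =
        \sum_i \sum_k req i k * alphah i k + a * \sum_i \sum_k req' i k * b0 i k.
      rewrite mulr_sumr -big_split; apply: eq_bigr => i _.
      rewrite mulr_sumr -big_split; apply: eq_bigr => k _.
      rewrite mulrDr mulrCA /bb /req'; congr (_ + a * _).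
      by case: ifP; rewrite ?mulr0 ?mul0r.
    have -> : \sum_j (ph j + a * q0 j) = \sum_j ph j + a * \sum_j q0 j.
      by rewrite big_split mulr_sumr.
    rewrite -pcostX'.
    have := ler_wpM2l (ltW ha) hobq.
    move: hA; rewrite /DLP_obj; lra.
- by move=> j; rewrite lerDl.
- move=> j hn; rewrite hqJ ?mulr0 ?addr0 //.
  by rewrite /J hn.
- by move=> i k hi; rewrite /bb (negbTE hi) mulr0 addr0.
Qed.
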